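(* Let $X$ be a real Banach space, $f\in\Gamma_0(X)$, $f(\bar x)=0$, and let $x^*\in\mathrm{bd}\,\partial f(\bar x)$. Let $\xi>0$, let $\hat x^*\in X^*\setminus\partial f(\bar x)$ with $\|\hat x^*-x^*\|<\xi$, let $\hat x\in X\setminus\{\bar x\}$ satisfy $f(\hat x)<\langle \hat x^*,\hat x-\bar x\rangle$, and let $z^*\in X^*$ with $\|z^*\|=1$ and $\langle z^*,\hat x-\bar x\rangle=\|\hat x-\bar x\|$. Define $g(u):=f(u)+\langle -x^*+\xi z^*,u-\bar x\rangle$ for $u\in X$. Then $\mathrm{Er}\,g(\bar x)\le 2\xi$.
   Context: $\Gamma_0(X)$ denotes the class of extended-real-valued proper convex lower semicontinuous functions on $X$. For convex $f$, $\partial f(x):=\{x^*\in X^*\mid \langle x^*,u-x\rangle\le f(u)-f(x)\ \forall u\in X\}$; $\mathrm{bd}$ denotes the boundary in the norm topology of $X^*$. $S_g:=\{x\mid g(x)\le 0\}$, $d(x,S)=\inf_{u\in S}\|u-x\|$ ($d(x,\emptyset)=+\infty$), and $\mathrm{Er}\,g(\bar x):=\liminf_{x\to\bar x,\ g(x)>0}\frac{g(x)}{d(x,S_g)}$. *)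

(* Defs.v *)
From Stdlib Require Import Reals.
Open Scope R_scope.

Record BanachSpace := {
  Bcar :> Type;
  vadd : Bcar -> Bcar -> Bcar;
  vzero : Bcar;
  vopp : Bcar -> Bcar;
  vscal : R -> Bcar -> Bcar;
  vnorm : Bcar -> R;
  vadd_assoc : forall x y z, vadd x (vadd y z) = vadd (vadd x y) z;
  vadd_comm : forall x y, vadd x y = vadd y x;
  vadd_0 : forall x, vadd x vzero = x;
  vadd_opp : forall x, vadd x (vopp x) = vzero;
  vscal_1 : forall x, vscal 1 x = x;
  vscal_assoc : forall a b x, vscal a (vscal b x) = vscal (a * b) x;
  vscal_distr_v : forall a x y, vscal a (vadd x y) = vadd (vscal a x) (vscal a y);
  vscal_distr_s : forall a b x, vscal (a + b) x = vadd (vscal a x) (vscal b x);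
  vnorm_eq0 : forall x, vnorm x = 0 -> x = vzero;
  vnorm_scal : forall a x, vnorm (vscal a x) = Rabs a * vnorm x;
  vnorm_triangle : forall x y, vnorm (vadd x y) <= vnorm x + vnorm y;
  vcomplete : forall u : nat -> Bcar,
    (forall eps, 0 < eps -> exists N, forall m n, (N <= m)%nat -> (N <= n)%nat ->
        vnorm (vadd (u m) (vopp (u n))) < eps) ->
    exists l, forall eps, 0 < eps -> exists N, forall n, (N <= n)%nat ->
        vnorm (vadd (u n) (vopp l)) < eps
}.

Arguments vadd {_}. Arguments vzero {_}. Arguments vopp {_}.
Arguments vscal {_}. Arguments vnorm {_}.

Definition vsub {X : BanachSpace} (x y : X) : X := vadd x (vopp y).

Record dual (X : BanachSpace) := {
  dfun :> X -> R;
  dlin : forall a (x y : X), dfun (vadd (vscal a x) y) = a * dfun x + dfun y;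
  dbounded : exists M, forall x : X, Rabs (dfun x) <= M * vnorm x
}.

Definition dnorm_is {X : BanachSpace} (phi : X -> R) (r : R) : Prop :=
  is_lub (fun t => exists x : X, vnorm x <= 1 /\ t = Rabs (phi x)) r.

Definition dnorm_lt {X : BanachSpace} (phi : X -> R) (eps : R) : Prop :=
  exists r, dnorm_is phi r /\ r < eps.

Definition dual_bd {X : BanachSpace} (S : dual X -> Prop) (xs : dual X) : Prop :=
  (forall eps, 0 < eps -> exists ys : dual X, S ys /\ dnorm_lt (fun x => ys x - xs x) eps) /\
  ~ (exists eps, 0 < eps /\
       forall ys : dual X, dnorm_lt (fun x => ys x - xs x) eps -> S ys).

Inductive ERbar := Fin (r : R) | PInf | MInf.

Definition ER_le (a b : ERbar) : Prop :=
  match a, b with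
  | MInf, _ => True
  | _, PInf => True
  | Fin x, Fin y => x <= y
  | _, _ => False
  end.

Definition ER_lt (a b : ERbar) : Prop :=
  match a, b with
  | MInf, MInf => False
  | MInf, _ => True
  | PInf, _ => False
  | Fin _, PInf => True
  | Fin x, Fin y => x < y
  | Fin _, MInf => False
  end.

Definition ER_plus_R (e : ERbar) (r : R) : ERbar :=
  match e with Fin x => Fin (x + r) | PInf => PInf | MInf => MInf end.

Definition ER_proper {X : BanachSpace} (f : X -> ERbar) : Prop :=
  (forall x, f x <> MInf) /\ (exists x, f x <> PInf).

(* convexity = convexity of the epigraph *)
Definition ER_convex {X : BanachSpace} (f : X -> ERbar) : Prop :=
  forall (x y : X) (a b t : R), 0 <= t <= 1 ->
    ER_le (f x) (Fin a) -> ER_le (f y) (Fin b) ->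
    ER_le (f (vadd (vscal t x) (vscal (1 - t) y))) (Fin (t * a + (1 - t) * b)).

(* lower semicontinuity = all sublevel sets are (sequentially) closed *)
Definition ER_lsc {X : BanachSpace} (f : X -> ERbar) : Prop :=
  forall (a : R) (u : nat -> X) (x : X),
    (forall n, ER_le (f (u n)) (Fin a)) ->
    (forall eps, 0 < eps -> exists N, forall n, (N <= n)%nat -> vnorm (vsub (u n) x) < eps) ->
    ER_le (f x) (Fin a).

Definition Gamma0 {X : BanachSpace} (f : X -> ERbar) : Prop :=
  ER_proper f /\ ER_convex f /\ ER_lsc f.

Definition subdiff {X : BanachSpace} (f : X -> ERbar) (x : X) (xs : dual X) : Prop :=
  exists fx, f x = Fin fx /\
    forall u : X, ER_le (Fin (xs (vsub u x) + fx)) (f u).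

Definition S_of {X : BanachSpace} (g : X -> ERbar) (x : X) : Prop := ER_le (g x) (Fin 0).

(* d(x,S) = d, i.e. d is the infimum of { ||u - x|| : u in S } (no such d if S is empty,
   which matches d(x, emptyset) = +infinity) *)
Definition dist_is {X : BanachSpace} (S : X -> Prop) (x : X) (d : R) : Prop :=
  (forall u, S u -> d <= vnorm (vsub u x)) /\
  (forall d', (forall u, S u -> d' <= vnorm (vsub u x)) -> d' <= d).

(* Er g(xb) <= c, where Er g(xb) = liminf_{x -> xb, g(x) > 0} g(x) / d(x, S_g),
   unfolded: for every eps > 0 and every delta > 0 there is x with ||x - xb|| < delta,
   g(x) > 0 and g(x)/d(x,S_g) < c + eps  (terms with g(x) = +oo or d = +oo contribute +oo). *)
Definition Er_le {X : BanachSpace} (g : X -> ERbar) (xb : X) (c : R) : Prop :=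
  forall eps delta, 0 < eps -> 0 < delta ->
    exists x : X, vnorm (vsub x xb) < delta /\
      exists r d, g x = Fin r /\ 0 < r /\ dist_is (S_of g) x d /\ 0 < d /\
                  r / d < c + eps.

(* Main.v *)
Require Import Defs.
From Stdlib Require Import Reals Lra.
Open Scope R_scope.

Lemma Rabs_m1 : Rabs (-1) = 1.
Proof. unfold Rabs; destruct (Rcase_abs (-1)); lra. Qed.
Lemma Rabs_ge_opp (x : R) : - x <= Rabs x.
Proof. unfold Rabs; destruct (Rcase_abs x); lra. Qed.
Lemma Rabs_ge_id (x : R) : x <= Rabs x.
Proof. unfold Rabs; destruct (Rcase_abs x); lra. Qed.
Lemma div_lt_aux (a b c : R) : 0 < b -> a < c * b -> a / b < c.
Proof.
  intros Hb H. apply Rmult_lt_reg_r with b; [lra|].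
  unfold Rdiv; rewrite Rmult_assoc, Rinv_l; lra.
Qed.

Lemma vscal0_zero (X:BanachSpace) (x:X) : vscal 0 x = vzero.
Proof. apply vnorm_eq0. rewrite vnorm_scal, Rabs_R0. ring. Qed.

Lemma vadd_scal_m1 (X:BanachSpace) (x:X) : vadd x (vscal (-1) x) = vzero.
Proof.
  rewrite <- (vscal_1 X x) at 1. rewrite <- vscal_distr_s.
  replace (1 + -1) with 0 by ring. apply vscal0_zero.
Qed.

Lemma vopp_scal (X:BanachSpace) (x:X) : vopp x = vscal (-1) x.
Proof.
  rewrite <- (vadd_0 X (vopp x)). rewrite <- (vadd_scal_m1 X x).
  rewrite vadd_assoc. rewrite (vadd_comm X (vopp x) x), vadd_opp.
  rewrite vadd_comm. apply vadd_0.
Qed.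

Lemma vnorm_zero (X:BanachSpace) : vnorm (@vzero X) = 0.
Proof. rewrite <- (vscal0_zero X vzero), vnorm_scal, Rabs_R0. ring. Qed.

Lemma vnorm_nonneg (X:BanachSpace) (x:X) : 0 <= vnorm x.
Proof.
  assert (H := vnorm_triangle X x (vscal (-1) x)).
  rewrite vadd_scal_m1, vnorm_scal, vnorm_zero, Rabs_m1 in H. lra.
Qed.

Lemma sub_eq0 (X:BanachSpace) (a b : X) : vsub a b = vzero -> a = b.
Proof.
  intros H. transitivity (vadd (vadd a (vopp b)) b).
  - rewrite <- vadd_assoc, (vadd_comm X (vopp b) b), vadd_opp, vadd_0; reflexivity.
  - unfold vsub in H; rewrite H, vadd_comm, vadd_0; reflexivity.
Qed.

Lemma vnorm_sub_sym (X:BanachSpace) (a b : X) : vnorm (vsub a b) = vnorm (vsub b a).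
Proof.
  assert (E : vsub a b = vscal (-1) (vsub b a)).
  { unfold vsub. rewrite !vopp_scal, vscal_distr_v, vscal_assoc.
    replace (-1 * -1) with 1 by ring. rewrite vscal_1, vadd_comm. reflexivity. }
  rewrite E, vnorm_scal, Rabs_m1. ring.
Qed.

Lemma conv_sub (X:BanachSpace) (t:R) (x y : X) :
  vsub (vadd (vscal t x) (vscal (1-t) y)) y = vscal t (vsub x y).
Proof.
  unfold vsub. rewrite !vopp_scal, vscal_distr_v, vscal_assoc.
  rewrite <- vadd_assoc, <- vscal_distr_s.
  replace (1 - t + -1) with (t * -1) by ring. reflexivity.
Qed.

Lemma dual_zero (X:BanachSpace) (d:dual X) : d vzero = 0.
Proof. pose proof (dlin X d 1 vzero vzero) as H. rewrite vscal_1, vadd_0 in H. lra. Qed.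
Lemma dual_scal (X:BanachSpace) (d:dual X) a x : d (vscal a x) = a * d x.
Proof. pose proof (dlin X d a x vzero) as H. rewrite vadd_0, dual_zero in H. lra. Qed.
Lemma dual_add (X:BanachSpace) (d:dual X) x y : d (vadd x y) = d x + d y.
Proof. pose proof (dlin X d 1 x y) as H. rewrite vscal_1 in H. lra. Qed.
Lemma dual_sub (X:BanachSpace) (d:dual X) x y : d (vsub x y) = d x - d y.
Proof. unfold vsub; rewrite dual_add, vopp_scal, dual_scal; ring. Qed.

Lemma dnorm_bound (X:BanachSpace) (phi : X -> R) r :
  dnorm_is phi r -> (forall a x, phi (vscal a x) = a * phi x) ->
  forall v, Rabs (phi v) <= r * vnorm v.
Proof.
  intros [Hub _] Hh v.
  destruct (Req_dec (vnorm v) 0) as [H0|H0].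
  - apply vnorm_eq0 in H0. subst v.
    assert (phi vzero = 0) as E.
    { rewrite <- (vscal0_zero X vzero). rewrite Hh. ring. }
    rewrite E, vnorm_zero, Rabs_R0. lra.
  - assert (Hn : 0 < vnorm v) by (pose proof (vnorm_nonneg X v); lra).
    assert (H1 : Rabs (phi (vscal (/ vnorm v) v)) <= r).
    { apply Hub. exists (vscal (/ vnorm v) v). split; [|reflexivity].
      rewrite vnorm_scal, Rabs_pos_eq.
      - rewrite Rinv_l; lra.
      - left; apply Rinv_0_lt_compat; lra. }
    rewrite Hh, Rabs_mult, Rabs_pos_eq in H1 by (left; apply Rinv_0_lt_compat; lra).
    apply Rmult_le_reg_l with (/ vnorm v); [apply Rinv_0_lt_compat; lra|].
    replace (/ vnorm v * (r * vnorm v)) with r by (field; lra). exact H1.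
Qed.

Lemma dnorm_bound2 (X:BanachSpace) (a b : dual X) r :
  dnorm_is (fun x => a x - b x) r -> forall v, Rabs (a v - b v) <= r * vnorm v.
Proof.
  intros H v. apply (dnorm_bound X (fun x => a x - b x) r H).
  intros c x. rewrite !dual_scal. ring.
Qed.

Theorem mainTheorem4 (X : BanachSpace) (f : X -> ERbar) (xb : X) (xs : dual X)
  (xi : R) (xhs : dual X) (xh : X) (zs : dual X) :
  Gamma0 f ->
  f xb = Fin 0 ->
  dual_bd (subdiff f xb) xs ->
  0 < xi ->
  ~ subdiff f xb xhs ->
  dnorm_lt (fun x => xhs x - xs x) xi ->
  xh <> xb ->
  ER_lt (f xh) (Fin (xhs (vsub xh xb))) ->
  dnorm_is zs 1 ->
  zs (vsub xh xb) = vnorm (vsub xh xb) ->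
  Er_le (fun u => ER_plus_R (f u) (- xs (vsub u xb) + xi * zs (vsub u xb))) xb (2 * xi).
Proof.
  intros [[Hnm _] [Hcv _]] Hf0 [Hcl _] Hxi _ [rho [Hrho Hrholt]] Hne Hlt Hz Hzv.
  assert (Hsub : forall u fu, f u = Fin fu -> xs (vsub u xb) <= fu).
  { intros u fu Hu. set (w := vsub u xb).
    destruct (Rle_or_lt (xs w) fu) as [|Hc]; [assumption|exfalso].
    pose proof (vnorm_nonneg X w) as Hw.
    set (e := (xs w - fu) / (vnorm w + 1)).
    assert (He : 0 < e) by (unfold e; apply Rdiv_lt_0_compat; lra).
    assert (He2 : e * (vnorm w + 1) = xs w - fu) by (unfold e; field; lra).
    destruct (Hcl e He) as [ys [[fx [Hfx Hys]] [r' [Hr' Hr'lt]]]].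
    specialize (Hys u). rewrite Hu in Hys. simpl in Hys.
    rewrite Hf0 in Hfx. injection Hfx as Hfx. subst fx.
    pose proof (dnorm_bound2 X ys xs r' Hr' w) as Hb.
    pose proof (Rabs_ge_opp (ys w - xs w)).
    assert (r' * vnorm w <= e * vnorm w) by (apply Rmult_le_compat_r; lra).
    fold w in Hys. nra. }
  set (v := vsub xh xb) in *.
  set (n := vnorm v) in *.
  assert (Hn : 0 < n).
  { destruct (vnorm_nonneg X v) as [|H]; [assumption|exfalso].
    apply Hne. symmetry in H. apply vnorm_eq0 in H. apply sub_eq0. exact H. }
  destruct (f xh) as [a| |] eqn:Efh;
    [| simpl in Hlt; contradiction | exfalso; exact (Hnm xh Efh)].
  simpl in Hlt.
  pose proof (dnorm_bound2 X xhs xs rho Hrho v) as Hb. fold n in Hb.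
  pose proof (Rabs_ge_id (xhs v - xs v)).
  pose proof (dnorm_bound X zs 1 Hz (fun c x => dual_scal X zs c x)) as Hzb.
  intros eps delta Heps Hdelta.
  set (t := Rmin 1 (delta / (2*n))).
  assert (Ht0: 0 < t) by (unfold t; apply Rmin_glb_lt; [lra| apply Rdiv_lt_0_compat; lra]).
  assert (Ht1: t <= 1) by apply Rmin_l.
  assert (Htd: t <= delta/(2*n)) by apply Rmin_r.
  set (xt := vadd (vscal t xh) (vscal (1-t) xb)).
  assert (Hxt : vsub xt xb = vscal t v) by apply conv_sub.
  assert (Hntx : vnorm (vsub xt xb) = t * n).
  { rewrite Hxt, vnorm_scal, Rabs_pos_eq by lra. reflexivity. }
  exists xt. split.
  { rewrite Hntx.
    assert (t*n <= delta/(2*n)*n) by (apply Rmult_le_compat_r; lra).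
    replace (delta/(2*n)*n) with (delta/2) in H0 by (field; lra). lra. }
  assert (Hc' : ER_le (f xt) (Fin (t*a + (1-t)*0))).
  { apply Hcv; [lra | rewrite Efh; simpl; lra | rewrite Hf0; simpl; lra]. }
  cbv beta.
  destruct (f xt) as [b| |] eqn:Eft;
    [ | simpl in Hc'; contradiction | exfalso; exact (Hnm xt Eft)].
  simpl in Hc'.
  pose proof (Hsub xt b Eft) as Hb2. rewrite Hxt, dual_scal in Hb2.
  assert (Hzt : zs (vsub xt xb) = t * n) by (rewrite Hxt, dual_scal, Hzv; reflexivity).
  exists (b + (- (t * xs v) + xi * (t * n))), (t*n).
  assert (Hpos : 0 < xi * (t * n)) by (apply Rmult_lt_0_compat; [lra | apply Rmult_lt_0_compat; lra]).
  split; [rewrite Hzt, Hxt, dual_scal; reflexivity|].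
  split; [lra|].
  split.
  { split.
    - intros u Hu. unfold S_of in Hu. cbv beta in Hu.
      destruct (f u) as [fu| |] eqn:Efu; simpl in Hu;
        [|contradiction| exfalso; exact (Hnm u Efu)].
      pose proof (Hsub u fu Efu).
      assert (zs (vsub u xb) <= 0) by nra.
      specialize (Hzb (vsub u xt)).
      pose proof (Rabs_ge_opp (zs (vsub u xt))).
      rewrite !dual_sub in *. lra.
    - intros d' Hd'. specialize (Hd' xb).
      rewrite vnorm_sub_sym, Hntx in Hd'. apply Hd'.
      unfold S_of. cbv beta. rewrite Hf0. unfold vsub. rewrite vadd_opp, !dual_zero.
      simpl. lra. }
  split.
  { apply Rmult_lt_0_compat; lra. }
  apply div_lt_aux; [apply Rmult_lt_0_compat; lra|].
  assert (t * a < t * xhs v) by (apply Rmult_lt_compat_l; lra).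
  assert (t * (xhs v - xs v) <= t * (rho * n)) by (apply Rmult_le_compat_l; lra).
  assert (t * (rho * n) <= t * (xi * n)).
  { apply Rmult_le_compat_l; [lra|]. apply Rmult_le_compat_r; lra. }
  nra.
Qed.
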